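(* Let $T$ be a tree. Then for every dominating set $S$ of $T$, $|a(S)|\ge 2\gamma(T)-|S|$.
   Context: A dominating set of a graph $G=(V,E)$ is a set $S\subseteq V$ such that every vertex is in $S$ or adjacent to a vertex of $S$. $\gamma(T)$ denotes the domination number (minimum size of a dominating set). For a dominating set $S$, $a(S)=\{v\in S: S\setminus\{v\}\text{ is not a dominating set}\}$ is the set of critical vertices of $S$. *)

(* Defs.v *)
From mathcomp Require Import all_boot.
Set Implicit Arguments. Unset Strict Implicit. Unset Printing Implicit Defensive.

Section Graphs.
Variable T : finType.
Variable e : rel T.

Definition simple_graph : Prop := irreflexive e /\ symmetric e.

Definition connected_graph : Prop := forall x y : T, connect e x y.

Definition acyclic_graph : Prop :=
  forall c : seq T, uniq c -> cycle e c -> size c < 3.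

Definition is_tree : Prop := simple_graph /\ connected_graph /\ acyclic_graph.

Definition dominating (S : {set T}) : bool :=
  [forall v, (v \in S) || [exists u in S, e u v]].

(* domination number: minimum size of a dominating set
   (setT is always dominating, so the default #|T| is never smaller) *)
Definition gamma : nat :=
  \big[minn/#|T|]_(S : {set T} | dominating S) #|S|.

Definition crit (S : {set T}) : {set T} :=
  [set v in S | ~~ dominating (S :\ v)].

End Graphs.

(* Main.v *)
Require Import Defs.
From mathcomp Require Import all_boot.
From Stdlib Require Import Classical.
From mathcomp Require Import zify.
Set Implicit Arguments. Unset Strict Implicit.

Lemma bigmin_le (I : eqType) (s : seq I) (P : pred I) (F : I -> nat) j x0 :
  j \in s -> P j -> \big[minn/x0]_(i <- s | P i) F i <= F j.
Proof.
elim: s => // a s IH; rewrite inE big_cons => /orP [/eqP <-|js] Pj.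
  by rewrite Pj geq_minl.
case: (P a); last exact: IH.
exact: leq_trans (geq_minr _ _) (IH js Pj).
Qed.

Lemma gamma_le (T : finType) (e : rel T) S : dominating e S -> gamma e <= #|S|.
Proof. by move=> dS; rewrite /gamma; apply: bigmin_le => //; rewrite mem_index_enum. Qed.

Section S.
Variable T : finType.
Variable e : rel T.
Hypothesis irr : irreflexive e.
Hypothesis sym : symmetric e.
Hypothesis acy : acyclic_graph e.

Lemma no_back a b r z : path e a (b :: r) -> uniq (a :: b :: r) -> e a z -> z \in r -> False.
Proof.
move=> pth un eaz zr; move: pth un; case/splitPr: zr => r1 r2 pth un.
have H := acy (c := a :: b :: rcons r1 z).
suff : (size r1).+3 < 3 by [].
have -> : (size r1).+3 = size (a :: b :: rcons r1 z) by rewrite /= size_rcons.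
apply: H.
  apply: subseq_uniq un; have -> : [:: a, b & r1 ++ z :: r2] = (a :: b :: rcons r1 z) ++ r2.
    by rewrite /= -cats1 -catA.
  exact: prefix_subseq.
rewrite /cycle rcons_path; apply/andP; split.
  rewrite -rcons_cons rcons_path.
  move: pth; rewrite -cat_cons cat_path => /andP [-> /=] /andP [-> _] //.
by rewrite /= last_rcons sym.
Qed.

Lemma ext1 v rest y : path e v rest -> uniq (v :: rest) -> e v y -> y != head v rest ->
  path e y (v :: rest) /\ uniq (y :: v :: rest).
Proof.
move=> pth un evy yh; split; first by rewrite /= pth andbT sym.
rewrite cons_uniq un andbT.
case: rest pth un yh => [|q r] pth un yh.
  by rewrite inE; apply/eqP => yv; move: evy; rewrite yv irr.
rewrite !inE negb_or; apply/andP; split.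
  by apply/eqP => yv; move: evy; rewrite yv irr.
rewrite negb_or yh /=; apply/negP => yr; exact: no_back pth un evy yr.
Qed.

Lemma route (S : {set T}) u v : u \in S -> v \in S -> u != v -> dominating e (S :\ u) ->
  dominating e (S :\ v) -> ~~ dominating e (S :\ v :\ u) ->
  e v u \/ exists w, [/\ w \notin S, e v w, e w u & forall x, x \in S -> e x w -> x = u \/ x = v].
Proof.
move=> uS vS uv /forallP dU /forallP dV.
rewrite negb_forall => /existsP [w]; rewrite negb_or => /andP [wn].
rewrite negb_exists => /forallP Hn.
have Hx : forall x, x \in S -> e x w -> x = u \/ x = v.
  move=> x xS exw; have := Hn x; rewrite exw andbT !in_setD1 xS andbT.
  by rewrite negb_and !negbK => /orP [/eqP|/eqP]; auto.
have Hw : w \in S -> w = u \/ w = v.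
  move=> wS; move: wn; rewrite !in_setD1 wS !andbT negb_and !negbK.
  by case/orP => /eqP; auto.
have inD1 : forall x (A : {set T}) y, x \in A :\ y -> x \in A /\ x != y.
  by move=> x A y; rewrite in_setD1 => /andP [].
case: (boolP (w \in S)) => wS.
  case: (Hw wS) => [wu|wv].
    move: (dU w); rewrite wu !in_setD1 eqxx /= => /existsP [x /andP [/inD1 [xS xu] exu]].
    rewrite wu in Hx; case: (Hx x xS exu) => xe; first by rewrite xe eqxx in xu.
    by left; rewrite -xe.
  move: (dV w); rewrite wv !in_setD1 eqxx /= => /existsP [x /andP [/inD1 [xS xv] exv]].
  rewrite wv in Hx; case: (Hx x xS exv) => xe; last by rewrite xe eqxx in xv.
  by left; rewrite sym -xe.
right; exists w; split => //.
  move: (dU w); rewrite in_setD1 (negbTE wS) andbF /= => /existsP [x /andP [/inD1 [xS xu] exw]].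
  by case: (Hx x xS exw) => xe; [rewrite xe eqxx in xu | rewrite -xe].
move: (dV w); rewrite in_setD1 (negbTE wS) andbF /= => /existsP [x /andP [/inD1 [xS xv] exw]].
by case: (Hx x xS exw) => xe; [rewrite sym -xe | rewrite xe eqxx in xv].
Qed.

Lemma extend v rest u :
  path e v rest -> uniq (v :: rest) ->
  ((e v u /\ u != head v rest) \/ (exists w, [/\ e v w, e w u, w != head v rest & u != v])) ->
  exists rest', [/\ size rest < size rest', path e u rest' & uniq (u :: rest')].
Proof.
move=> pth un [[evu uh]|[w [evw ewu wh uv]]].
  have [p1 u1] := ext1 pth un evu uh.
  by exists (v :: rest); split.
have [p1 u1] := ext1 pth un evw wh.
have [p2 u2] := ext1 p1 u1 ewu uv.
by exists (w :: v :: rest); split => //=; rewrite ltnS leqnSn.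
Qed.

Definition good (S : {set T}) v := forall u1 u2, u1 \in S -> u2 \in S -> u1 != v -> u2 != v ->
  u1 \notin crit e S -> u2 \notin crit e S -> u1 \in crit e (S :\ v) -> u2 \in crit e (S :\ v) ->
  u1 = u2.

Lemma critE (S : {set T}) x : (x \in crit e S) = (x \in S) && ~~ dominating e (S :\ x).
Proof. by rewrite /crit inE. Qed.

Lemma exists_good (S : {set T}) v0 : v0 \in S -> v0 \notin crit e S ->
  exists v, [/\ v \in S, v \notin crit e S & good S v].
Proof.
move=> v0S v0c.
apply: NNPP => Hn.
have step : forall v rest, path e v rest -> uniq (v :: rest) -> v \in S -> v \notin crit e S ->
  exists v' rest', [/\ size rest < size rest', path e v' rest', uniq (v' :: rest'), v' \in S
                    & v' \notin crit e S].
  move=> v rest pth un vS vc.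
  have ng : ~ good S v by move=> g; apply: Hn; exists v; split.
  have [u1 [u2 [[u1S u2S u1v u2v] [u1c u2c c1 c2] u12]]] :
     exists u1 u2, [/\ [/\ u1 \in S, u2 \in S, u1 != v & u2 != v], [/\ u1 \notin crit e S,
        u2 \notin crit e S, u1 \in crit e (S :\ v) & u2 \in crit e (S :\ v)] & u1 <> u2].
    apply: NNPP => H; apply: ng => u1 u2 a1 a2 a3 a4 a5 a6 a7 a8.
    apply: NNPP => H'; apply: H; exists u1, u2; split => //; split.
  have dV : dominating e (S :\ v) by move: vc; rewrite critE vS /= negbK.
  have R : forall u, u \in S -> u != v -> u \notin crit e S -> u \in crit e (S :\ v) ->
    e v u \/ exists w, [/\ w \notin S, e v w, e w u & forall x, x \in S -> e x w -> x = u \/ x = v].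
    move=> u uS uv uc cu; apply: route => //.
      by move: uc; rewrite critE uS /= negbK.
    by move: cu; rewrite critE => /andP [].
  set q := head v rest.
  suff [u [uS uc H]] : exists u, [/\ u \in S, u \notin crit e S &
     ((e v u /\ u != q) \/ (exists w, [/\ e v w, e w u, w != q & u != v]))].
    have [rest' [sz p' u']] := extend pth un H.
    by exists u, rest'; split.
  have Hu1 := R u1 u1S u1v u1c c1; have Hu2 := R u2 u2S u2v u2c c2.
  case: Hu1 => [ev1|[w1 [w1S ev1 e1 X1]]].
    case: (boolP (u1 == q)) => [/eqP u1q|u1q]; last by exists u1; split => //; left.
    case: Hu2 => [ev2|[w2 [w2S ev2 e2 X2]]].
      case: (boolP (u2 == q)) => [/eqP u2q|u2q]; last by exists u2; split => //; left.
      by exfalso; apply: u12; rewrite u1q u2q.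
    case: (boolP (w2 == q)) => [/eqP w2q|w2q]; last by exists u2; split => //; right; exists w2.
    by exfalso; move: w2S; rewrite w2q -u1q u1S.
  case: (boolP (w1 == q)) => [/eqP w1q|w1q]; last by exists u1; split => //; right; exists w1.
  case: Hu2 => [ev2|[w2 [w2S ev2 e2 X2]]].
    case: (boolP (u2 == q)) => [/eqP u2q|u2q]; last by exists u2; split => //; left.
    by exfalso; move: w1S; rewrite w1q -u2q u2S.
  case: (boolP (w2 == q)) => [/eqP w2q|w2q]; last by exists u2; split => //; right; exists w2.
  exfalso; case: (X1 u2 u2S); first by rewrite sym w1q -w2q.
    by move=> E; apply: u12.
  by move=> E; rewrite E eqxx in u2v.
have big : forall n, exists v rest, [/\ n <= size rest, path e v rest, uniq (v :: rest), v \in S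
                    & v \notin crit e S].
  elim=> [|n [v [rest [sz pth un vS vc]]]]; first by exists v0, [::]; split.
  have [v' [rest' [sz' p' u' v'S v'c]]] := step v rest pth un vS vc.
  by exists v', rest'; split => //; apply: leq_ltn_trans sz'.
have [v [rest [sz pth un _ _]]] := big #|T|.
have := max_card (mem (v :: rest)).
rewrite (card_uniqP un) /=; move=> H; have := leq_trans H sz; by rewrite ltnn.
Qed.
End S.

Lemma crit_sub (T : finType) (e : rel T) (S : {set T}) : crit e S \subset S.
Proof. by apply/subsetP => x; rewrite critE => /andP []. Qed.

Lemma crit_step (T : finType) (e : rel T) (S : {set T}) v :
  good e S v -> #|crit e (S :\ v)| <= #|crit e S| + 1.
Proof.
move=> g.
set X := crit e (S :\ v) :\: crit e S.
have sub : crit e (S :\ v) \subset crit e S :|: X.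
  by apply/subsetP => x xc; rewrite in_setU in_setD xc andbT orbN.
apply: leq_trans (subset_leq_card sub) _.
rewrite cardsU; apply: leq_trans (leq_subr _ _) _; rewrite leq_add2l.
apply/card_le1_eqP => x y; rewrite !in_setD => /andP [xc cx] /andP [yc cy].
have /andP [xv xS] : (x != v) && (x \in S).
  by rewrite -in_setD1; apply: (subsetP (crit_sub e (S :\ v))).
have /andP [yv yS] : (y != v) && (y \in S).
  by rewrite -in_setD1; apply: (subsetP (crit_sub e (S :\ v))).
exact: g.
Qed.

Lemma allcrit (T : finType) (e : rel T) (S : {set T}) : dominating e S ->
  ~~ [exists v, (v \in S) && (v \notin crit e S)] -> 2 * gamma e <= #|crit e S| + #|S|.
Proof.
move=> dS H.
have sub : S \subset crit e S.
  apply/subsetP => x xS; apply: contraR H => xc; apply/existsP; exists x; by rewrite xS xc.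
rewrite mul2n -addnn; apply: leq_add; last exact: gamma_le.
exact: leq_trans (gamma_le dS) (subset_leq_card sub).
Qed.

Theorem lemma3p4 (T : finType) (e : rel T) :
  is_tree e ->
  forall S : {set T}, dominating e S ->
    2 * gamma e <= #|crit e S| + #|S|.
Proof.
move=> [[irr sym] [_ acy]] S.
move: {2}#|S| (leqnn #|S|) => n; elim: n S => [|n IH] S Hn dS;
  (case: (boolP [exists v, (v \in S) && (v \notin crit e S)]); last exact: allcrit).
  move=> /existsP [v0 /andP [v0S v0c]].
  by move: Hn; rewrite (cardsD1 v0 S) v0S.
move=> /existsP [v0 /andP [v0S v0c]].
have [v [vS vc g]] := exists_good irr sym acy v0S v0c.
have dS' : dominating e (S :\ v) by move: vc; rewrite critE vS /= negbK.
have cS : #|S| = #|S :\ v| + 1 by rewrite (cardsD1 v S) vS addnC.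
have Hn2 : #|S :\ v| <= n by move: Hn; rewrite cS addn1 ltnS.
have H := IH (S :\ v) Hn2 dS'.
apply: leq_trans H _.
have := crit_step g; rewrite cS; lia.
Qed.
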